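(* Under the hypotheses of the average consensus error bound (SGP with Assumptions (1)–(4), the almost-sure bound $\|\bar{x}^{(t)}-z_i^{(t)}\|\le Cq^tX_0+\eta C\sum_{s=0}^tq^{t-s}\max_j\|g_j(z_j^{(s)};\xi_j^{(s)})\|$ for all $t\ge0$ and $i$ with $X_0=\max_m\|x_m^{(0)}\|$, and $P:=1-\frac{9\eta^2C^2L^2n}{(1-q)^2}>0$), assume moreover $0<\eta\le1/L$ and that for a given $T\ge1$ the cumulative inequality $$\frac{\eta}{2}\sum_{t=0}^{T-1}\mathbb{E}\|\nabla f(\bar{x}^{(t)})\|^2+\frac{\eta-L\eta^2}{2}\sum_{t=0}^{T-1}\mathbb{E}\Big\|\frac1n\sum_{i=1}^n\nabla f_i(z_i^{(t)})\Big\|^2\le f(\bar{x}^{(0)})-f^*+\frac{L\eta^2\sigma^2}{2n}T+\frac{\eta L^2}{2}\sum_{t=0}^{T-1}M^{(t)}$$ holds, where $M^{(t)}=\frac1n\sum_i\mathbb{E}\|\bar{x}^{(t)}-z_i^{(t)}\|^2$. Then $$\Big(1-\frac{9\eta^2L^2C^2}{P(1-q)^2}\Big)\sum_{t=0}^{T-1}\mathbb{E}\|\nabla f(\bar{x}^{(t)})\|^2\le\frac{2(f(\bar{x}^{(0)})-f^* )}{\eta}+\frac{L\eta\sigma^2T}{n}+\frac{3L^2C^2X_0^2}{P(1-q)^2}+\frac{3\eta^2L^2C^2n\sigma^2T}{P(1-q)^2}+\frac{9\eta^2L^2C^2n\zeta^2T}{P(1-q)^2}.$$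
   Context: Setting (SGP). Nodes $V=\{1,\dots,n\}$, $n\ge2$, base topology $G=(V,E)$ bidirected with self-loops; local objectives $f_i$, $f=\frac1n\sum_i f_i$, $f^*$ the finite optimal value of $f$; stochastic gradients $g_i(x;\xi)$ with fresh independent minibatches. SGP with nonnegative column-stochastic mixing matrices $W^{(t)}$ ($W^{(t)}_{ij}\ne0$ only if $(j,i)\in E$): $x_i^{(t+1)}=\sum_j W^{(t)}_{ij}(x_j^{(t)}-\eta g_j(z_j^{(t)};\xi_j^{(t)}))$, $w_i^{(t+1)}=\sum_jW^{(t)}_{ij}w_j^{(t)}$, $w_i^{(0)}=1$, $z_i^{(t)}=x_i^{(t)}/w_i^{(t)}$, $\bar{x}^{(t)}=\frac1n\sum_ix_i^{(t)}$. $E^{(t)}=\{(j,i)\in E:W^{(t)}_{ij}\ne0\}$, $\delta=\min_t\min_{W^{(t)}_{ij}>0}W^{(t)}_{ij}$. Assumptions: (1) each $f_i$ is $L$-smooth; (2) $\mathbb{E}\|g_i(x;\xi)-\nabla f_i(x)\|^2\le\sigma^2$ for all $i,x$; (3) $\frac1n\sum_i\|\nabla f_i(x)-\nabla f(x)\|^2\le\zeta^2$ for all $x$; (4) positive integers $B,\Delta$ exist with $(V,\bigcup_{t=lB}^{(l+1)B-1}E^{(t)})$ strongly connected of diameter at most $\Delta$ for every $l\in\mathbb{N}$. Constants: $C=4/\delta^{\Delta B}$ and $q=(1-\delta^{\Delta B})^{1/(\Delta B)}\in(0,1)$. *)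

(* Defs.v *)
From HB Require Import structures.
From mathcomp Require Import all_boot all_order all_algebra.
From mathcomp Require Import all_classical all_reals all_analysis.
Set Implicit Arguments. Unset Strict Implicit. Unset Printing Implicit Defensive.
Import Order.TTheory GRing.Theory Num.Theory.
Import numFieldNormedType.Exports.
Local Open Scope ring_scope.

Definition dotv {R : realType} {d : nat} (u v : 'rV[R]_d) : R :=
  \sum_(k < d) u ord0 k * v ord0 k.
Definition enorm {R : realType} {d : nat} (v : 'rV[R]_d) : R :=
  Num.sqrt (dotv v v).

Definition is_gradient {R : realType} {d : nat}
    (f : 'rV[R]_d -> R) (gf : 'rV[R]_d -> 'rV[R]_d) : Prop :=
  forall x, differentiable f x /\ forall h, ('d f x) h = dotv (gf x) h.

Definition L_smooth {R : realType} {d : nat} (L : R)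
    (f : 'rV[R]_d -> R) (gf : 'rV[R]_d -> 'rV[R]_d) : Prop :=
  is_gradient f gf /\ forall x y, enorm (gf x - gf y) <= L * enorm (x - y).

Definition diam_le {n : nat} (e : rel 'I_n) (k : nat) : Prop :=
  forall u v : 'I_n, exists p : seq 'I_n,
    [/\ path e u p, last u p = v & (size p <= k)%N].

(* union of the communication graphs E^(t) over the window [lB, (l+1)B):
   edge (j,i) present iff W^(t)_{ij} <> 0 for some t in the window *)
Definition window_rel {R : realType} {n : nat} (W : nat -> 'M[R]_n)
    (B l : nat) : rel 'I_n :=
  fun j i => [exists s : 'I_B, W (l * B + s)%N i j != 0].

(* The SGP iterates (x^(t), w^(t)) as a deterministic function of the
   realised minibatch path xiv : nat -> 'I_n -> Xi. *)
Fixpoint sgp_state {R : realType} {n d : nat} {Xi : Type}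
    (W : nat -> 'M[R]_n) (g : 'I_n -> 'rV[R]_d -> Xi -> 'rV[R]_d)
    (eta : R) (x0 : 'I_n -> 'rV[R]_d) (xiv : nat -> 'I_n -> Xi) (t : nat)
    : ('I_n -> 'rV[R]_d) * ('I_n -> R) :=
  match t with
  | 0 => (x0, fun _ => 1)
  | t'.+1 =>
      let st := sgp_state W g eta x0 xiv t' in
      let x := st.1 in let w := st.2 in
      let z := fun j => (w j)^-1 *: x j in
      (fun i => \sum_(j < n) W t' i j *: (x j - eta *: g j (z j) (xiv t' j)),
       fun i => \sum_(j < n) W t' i j * w j)
  end.

Section Random.
Context {R : realType} {n d : nat} {Xi : Type} {Omega : Type}.
Variables (W : nat -> 'M[R]_n) (g : 'I_n -> 'rV[R]_d -> Xi -> 'rV[R]_d)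
  (eta : R) (x0 : 'I_n -> 'rV[R]_d) (xi : nat -> 'I_n -> Omega -> Xi).

Definition path_of (om : Omega) : nat -> 'I_n -> Xi := fun s j => xi s j om.
Definition sgp_x t i om := (sgp_state W g eta x0 (path_of om) t).1 i.
Definition sgp_w t i om := (sgp_state W g eta x0 (path_of om) t).2 i.
Definition sgp_z t i om := (sgp_w t i om)^-1 *: sgp_x t i om.
Definition sgp_xbar t om := n%:R^-1 *: \sum_(i < n) sgp_x t i om.
Definition sgp_grad t j om := g j (sgp_z t j om) (xi t j om).
End Random.

(* Main.v *)
Require Import Defs.
From HB Require Import structures.
From mathcomp Require Import all_boot all_order all_algebra.
From mathcomp Require Import all_classical all_reals all_analysis.
From mathcomp Require Import ring lra.
Import Order.TTheory GRing.Theory Num.Theory.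
Import numFieldNormedType.Exports.
Set Implicit Arguments. Unset Strict Implicit. Unset Printing Implicit Defensive.
Local Open Scope ring_scope.
Local Open Scope classical_set_scope.
Notation measurable_funM := measurable_realfun.measurable_funM.
Notation measurable_funB := measurable_realfun.measurable_funB.
Notation measurable_funD := measurable_realfun.measurable_funD.
Notation measurable_funX := measurable_realfun.measurable_funX.
Notation measurable_EFinP := measurable_realfun.measurable_EFinP.
Lemma t2 (R : realFieldType) (a b P Q A : R) : 0 <= P -> 0 <= Q -> A^+2 <= P * Q -> 2 * a * b * A <= a^+2 * Q + b^+2 * P.
Proof. move=> P0 Q0 H.
have X0 : 0 <= a^+2 * Q + b^+2 * P by apply: addr_ge0; apply: mulr_ge0; rewrite ?sqr_ge0.
have : (2 * a * b * A)^+2 <= (a^+2 * Q + b^+2 * P)^+2.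
  have h1 : 0 <= (a^+2 * Q - b^+2 * P)^+2 by rewrite sqr_ge0.
  have h2 : 0 <= a^+2 * b^+2 * (P * Q - A^+2) by apply: mulr_ge0; [apply: mulr_ge0; exact: sqr_ge0| rewrite subr_ge0].
  have E : (a^+2 * Q + b^+2 * P)^+2 - (2 * a * b * A)^+2 = (a^+2 * Q - b^+2 * P)^+2 + 4 * (a^+2 * b^+2 * (P * Q - A^+2)) by ring.
  lra.
nra. Qed.
Section Vec.
Variables (R : realType) (dd : nat).
Implicit Types u v w : 'rV[R]_dd.

Lemma dotv_ge0 v : 0 <= dotv v v.
Proof. by apply: sumr_ge0 => k _; rewrite -expr2 sqr_ge0. Qed.

Lemma enorm_sq v : enorm v ^+ 2 = dotv v v.
Proof. by rewrite /enorm sqr_sqrtr // dotv_ge0. Qed.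

Lemma enorm_ge0 v : 0 <= enorm v.
Proof. exact: sqrtr_ge0. Qed.

Lemma comp_le_dot v k : v ord0 k ^+ 2 <= dotv v v.
Proof.
rewrite /dotv (bigD1 k) //= -expr2 lerDl.
by apply: sumr_ge0 => i _; rewrite -expr2 sqr_ge0.
Qed.

Lemma comp_le_enorm v k : `|v ord0 k| <= enorm v.
Proof. by rewrite -sqrtr_sqr /enorm ler_sqrt ?dotv_ge0 // comp_le_dot. Qed.

Lemma sumsq_le (I : Type) (s : seq I) (F : I -> R) :
  (forall i, 0 <= F i) -> \sum_(i <- s) F i ^+ 2 <= (\sum_(i <- s) F i) ^+ 2.
Proof.
move=> F0; elim: s => [|a s IH]; first by rewrite !big_nil expr0n.
rewrite !big_cons.
have S0 : 0 <= \sum_(i <- s) F i by apply: sumr_ge0.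
have := F0 a; nra.
Qed.

Lemma enorm_le_l1 v : enorm v <= \sum_k `|v ord0 k|.
Proof.
rewrite /enorm -(@ger0_norm _ (\sum_k `|v ord0 k|)); last by apply: sumr_ge0.
rewrite -sqrtr_sqr ler_sqrt ?sqr_ge0 //.
have h := @sumsq_le _ (index_enum 'I_dd) (fun k => `|v ord0 k|) (fun k => normr_ge0 _).
apply: le_trans h.
by rewrite /dotv; apply: ler_sum => k _; rewrite real_normK ?num_real // expr2.
Qed.

Lemma dot2 u v : dotv (u + v) (u + v) <= 2 * dotv u u + 2 * dotv v v.
Proof.
rewrite /dotv !mulr_sumr -big_split /=; apply: ler_sum => k _; rewrite !mxE; have := sqr_ge0 (u ord0 k - v ord0 k); nra.
Qed.

Lemma dot3 u v w : dotv (u + v + w) (u + v + w) <= 3 * dotv u u + 3 * dotv v v + 3 * dotv w w.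
Proof.
rewrite /dotv !mulr_sumr -!big_split /=; apply: ler_sum => k _; rewrite !mxE.
have := sqr_ge0 (u ord0 k - v ord0 k); have := sqr_ge0 (w ord0 k - v ord0 k); have := sqr_ge0 (u ord0 k - w ord0 k); nra.
Qed.

Lemma dotZ c v : dotv (c *: v) (c *: v) = c ^+ 2 * dotv v v.
Proof.
rewrite /dotv mulr_sumr; apply: eq_bigr => k _; rewrite !mxE; ring.
Qed.

Lemma lip_sq (a b : 'rV[R]_dd) (K : R) : enorm a <= K * enorm b -> dotv a a <= K ^+ 2 * dotv b b.
Proof.
move=> h; rewrite -!enorm_sq -exprMn.
have := enorm_ge0 a; have := enorm_ge0 b.
move=> h1 h2; rewrite ler_sqr //; exact: le_trans h.
Qed.
End Vec.

Lemma CS (R : realType) (I : Type) (s : seq I) (a b : I -> R) :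
  (\sum_(i <- s) a i * b i) ^+ 2 <= (\sum_(i <- s) a i ^+ 2) * (\sum_(i <- s) b i ^+ 2).
Proof.
elim: s => [|x s IH]; first by rewrite !big_nil expr0n mul0r.
rewrite !big_cons.
set A := \sum_(i <- s) a i * b i in IH *.
set P := \sum_(i <- s) a i ^+ 2 in IH *.
set Q := \sum_(i <- s) b i ^+ 2 in IH *.
have P0 : 0 <= P by apply: sumr_ge0 => i _; rewrite sqr_ge0.
have Q0 : 0 <= Q by apply: sumr_ge0 => i _; rewrite sqr_ge0.
have h := t2 (a x) (b x) P0 Q0 IH.
nra.
Qed.

Lemma wCS (R : realType) (I : Type) (s : seq I) (w y : I -> R) :
  (forall i, 0 <= w i) ->
  (\sum_(i <- s) w i * y i) ^+ 2 <= (\sum_(i <- s) w i) * (\sum_(i <- s) w i * y i ^+ 2).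
Proof.
move=> w0; elim: s => [|x s IH]; first by rewrite !big_nil expr0n mul0r.
rewrite !big_cons.
set A := \sum_(i <- s) w i * y i in IH *.
set P := \sum_(i <- s) w i in IH *.
set Q := \sum_(i <- s) w i * y i ^+ 2 in IH *.
have P0 : 0 <= P by apply: sumr_ge0.
have Q0 : 0 <= Q by apply: sumr_ge0 => i _; rewrite mulr_ge0 ?sqr_ge0.
have h := t2 1 (y x) P0 Q0 IH.
have := w0 x.
nra.
Qed.
Section Vec2.
Variables (R : realType) (dd : nat).
Lemma dotN (v : 'rV[R]_dd) : dotv (- v) (- v) = dotv v v.
Proof. by rewrite /dotv; apply: eq_bigr => k _; rewrite !mxE mulrNN. Qed.

Lemma dot_sum (m : nat) (c : 'I_m -> R) (v : 'I_m -> 'rV[R]_dd) :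
  dotv (\sum_(j < m) c j *: v j) (\sum_(j < m) c j *: v j)
  <= (\sum_(j < m) c j ^+ 2) * \sum_(j < m) dotv (v j) (v j).
Proof.
rewrite /dotv.
under eq_bigr do rewrite summxE -expr2.
under [X in _ <= _ * X]eq_bigr do under eq_bigr do rewrite -expr2.
rewrite exchange_big mulr_sumr /=; apply: ler_sum => k _.
under eq_bigr do rewrite mxE.
exact: CS.
Qed.
End Vec2.
Lemma meas_aff (R : realType) (a b c : R) : 0 < c -> measurable [set x : R | a <= c * x < b].
Proof.
move=> c0.
have -> : [set x : R | a <= c * x < b] = `[a / c, b / c[%classic.
  apply/seteqP; split => x /=; rewrite in_itv /= ler_pdivrMr // ltr_pdivlMr //;
  by rewrite ![x * c]mulrC.
exact: measurable_itv.
Qed.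

Section Meas.
Variables (R : realType) (dd : nat) (d0 : measure_display) (T : measurableType d0).

Definition rnd (m : nat) (v : 'rV[R]_dd) : 'rV[R]_dd :=
  \row_k ((Num.floor (m.+1%:R * v ord0 k))%:~R / m.+1%:R).

Lemma meas_rnd (V : T -> 'rV[R]_dd) (H : 'rV[R]_dd -> R) m :
  (forall k, measurable_fun setT (fun om => V om ord0 k)) ->
  measurable_fun setT (fun om => H (rnd m (V om))).
Proof.
move=> mV _ Y mY.
pose U := {ffun 'I_dd -> int}.
pose rz (z : U) : 'rV[R]_dd := \row_k ((z k)%:~R / m.+1%:R).
pose cell (z : U) := \bigcap_(k in [set: 'I_dd]) [set om | Num.floor (m.+1%:R * V om ord0 k) = z k].
pose F (z : U) := if pselect (Y (H (rz z))) then cell z else set0.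
have -> : [set: T] `&` (fun om => H (rnd m (V om))) @^-1` Y = \bigcup_z F z.
  apply/seteqP; split => om /=.
    move=> [_ Hy]; exists [ffun k => Num.floor (m.+1%:R * V om ord0 k)] => //.
    rewrite /F; case: pselect => Hc.
      by move=> k _ /=; rewrite ffunE.
    apply: Hc; rewrite /rz.
    have -> : (\row_k ((([ffun k => Num.floor (m.+1%:R * V om ord0 k)] : U) k)%:~R / m.+1%:R)) = rnd m (V om).
      by apply/rowP => k; rewrite !mxE ffunE.
    exact: Hy.
  move=> [z _]; rewrite /F; case: pselect => // Hc Hcell; split => //.
  have -> : rnd m (V om) = rz z.
    by apply/rowP => k; rewrite !mxE (Hcell k).
  exact: Hc.
apply: countable_bigcupT_measurable; first exact: countableP.
move=> z; rewrite /F; case: pselect => H0; last exact: measurable0.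
apply: fin_bigcap_measurable; first exact: finite_finset.
move=> k _.
have -> : [set om | Num.floor (m.+1%:R * V om ord0 k) = z k] =
   [set: T] `&` (fun om => V om ord0 k) @^-1` [set x : R | (z k)%:~R <= m.+1%:R * x < (z k + 1)%:~R].
  apply/seteqP; split => om /=.
    by move=> h; split => //; rewrite -h; exact: floor_itv.
  by move=> [_ /floor_def].
apply: mV => //.
by apply: meas_aff; rewrite ltr0Sn.
Qed.
End Meas.
Arguments rnd {R dd}.
Section Meas2.
Variables (R : realType) (dd : nat) (d0 : measure_display) (T : measurableType d0).

Lemma rnd_err (m : nat) (x : R) :
  `|x - (Num.floor (m.+1%:R * x))%:~R / m.+1%:R| <= m.+1%:R^-1.
Proof.
have c0 : 0 < m.+1%:R :> R by rewrite ltr0Sn.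
have /andP[h1 h2] := floor_itv (m.+1%:R * x).
rewrite intrD in h2.
set fl := (Num.floor _)%:~R in h1 h2 *.
have -> : x - fl / m.+1%:R = (m.+1%:R * x - fl) / m.+1%:R by field; rewrite gt_eqF.
have hp : 0 <= m.+1%:R^-1 :> R by rewrite invr_ge0 ltW.
rewrite normrM (ger0_norm hp) ger0_norm ?subr_ge0 //.
rewrite -[leRHS]mul1r ler_pM2r ?invr_gt0 //; lra.
Qed.

Lemma meas_lip (V : T -> 'rV[R]_dd) (H : 'rV[R]_dd -> R) (K : R) :
  (forall k, measurable_fun setT (fun om => V om ord0 k)) ->
  (forall u v, `|H u - H v| <= K * \sum_k `|u ord0 k - v ord0 k|) ->
  measurable_fun setT (fun om => H (V om)).
Proof.
move=> mV HL.
apply: (measurable_realfun.measurable_fun_cvg (h:=fun m om => H (rnd m (V om)))).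
  by move=> m; exact: meas_rnd.
move=> om _; apply/cvgrPdist_le => e e0.
set K' := `|K| * dd%:R + 1.
have K'0 : 0 < K' by rewrite /K' ltr_pwDr // mulr_ge0 // ler0n.
have eK : 0 < e / K' by rewrite divr_gt0.
near=> m.
have hm : m.+1%:R^-1 < e / K' by near: m; exact: (near_infty_natSinv_lt (PosNum eK)).
apply: le_trans (HL _ _) _.
have hs : \sum_k `|V om ord0 k - rnd m (V om) ord0 k| <= dd%:R * m.+1%:R^-1.
  have -> : dd%:R * m.+1%:R^-1 = \sum_(k < dd) m.+1%:R^-1 :> R by rewrite sumr_const card_ord mulr_natl.
  by apply: ler_sum => k _; rewrite /rnd mxE; exact: rnd_err.
have hK : K <= `|K| by exact: ler_norm.
have hs0 : 0 <= \sum_k `|V om ord0 k - rnd m (V om) ord0 k| by apply: sumr_ge0 => k _.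
apply: le_trans (_ : `|K| * (dd%:R * m.+1%:R^-1) <= e).
  apply: le_trans (ler_wpM2r hs0 hK) _.
  by apply: ler_wpM2l => //.
have : `|K| * (dd%:R * m.+1%:R^-1) <= K' * m.+1%:R^-1.
  rewrite mulrA ler_wpM2r ?invr_ge0 ?ler0n // /K' lerDl //.
move/le_trans; apply.
rewrite -(ltr_pM2l K'0) in hm.
have : K' * (e / K') = e by field; rewrite gt_eqF.
move=> E; rewrite E in hm; exact: ltW.
Unshelve. all: by end_near.
Qed.
End Meas2.
Section Geo.
Variable R : realType.
Definition Rq (q : R) (Q : nat -> R) (t : nat) := \sum_(s < t.+1) q ^+ (t - s) * Q s.

Lemma Rq_succ q Q t : Rq q Q t.+1 = q * Rq q Q t + Q t.+1.
Proof.
rewrite /Rq big_ord_recr /= subnn expr0 mul1r mulr_sumr; congr (_ + _).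
apply: eq_bigr => s _ /=; rewrite mulrA -exprS subSn //.
by rewrite -ltnS.
Qed.

Lemma Rq_ge0 q Q t : 0 <= q -> (forall s, 0 <= Q s) -> 0 <= Rq q Q t.
Proof. by move=> q0 Q0; apply: sumr_ge0 => s _; rewrite mulr_ge0 ?exprn_ge0. Qed.

Lemma Rq_ge q Q t : 0 <= q -> (forall s, 0 <= Q s) -> Q t <= Rq q Q t.
Proof.
move=> q0 Q0; case: t => [|t]; first by rewrite /Rq big_ord1 subnn expr0 mul1r.
rewrite Rq_succ lerDr mulr_ge0 // Rq_ge0 //.
Qed.

Lemma Rq_geo q t : 0 <= q < 1 -> Rq q (fun _ => 1) t <= (1 - q)^-1.
Proof.
move=> /andP[q0 q1]; have q1' : 0 < 1 - q by rewrite subr_gt0.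
elim: t => [|t IH]; first by rewrite /Rq big_ord1 mulr1 expr0 invf_ge1 // lerBlDr lerDl.
rewrite Rq_succ.
have -> : (1 - q)^-1 = q * (1 - q)^-1 + 1 by field; rewrite gt_eqF.
by rewrite lerD2r ler_wpM2l.
Qed.

Lemma sumRq q Q T : 0 <= q -> (forall s, 0 <= Q s) ->
  (1 - q) * \sum_(t < T) Rq q Q t + Rq q Q T = \sum_(t < T.+1) Q t.
Proof.
move=> q0 Q0; elim: T => [|T IH]; first by rewrite big_ord0 mulr0 add0r /Rq !big_ord1 subnn expr0 mul1r.
rewrite big_ord_recr /= mulrDr -addrA Rq_succ.
rewrite [in RHS]big_ord_recr /= -IH; ring.
Qed.

Lemma sumRq_le q Q T : 0 <= q < 1 -> (forall s, 0 <= Q s) ->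
  \sum_(t < T) Rq q Q t <= (1 - q)^-1 * \sum_(t < T) Q t.
Proof.
move=> /andP[q0 q1] Q0; have q1' : 0 < 1 - q by rewrite subr_gt0.
rewrite -(ler_pM2l q1') mulrA mulfV ?gt_eqF // mul1r.
have := @sumRq q Q T q0 Q0; rewrite big_ord_recr /=.
have := @Rq_ge q Q T q0 Q0; lra.
Qed.

Lemma sum_geo (q : R) T : 0 <= q < 1 -> \sum_(t < T) q ^+ t <= (1 - q)^-1.
Proof.
move=> /andP[q0 q1]; have q1' : 0 < 1 - q by rewrite subr_gt0.
have E : (1 - q) * \sum_(t < T) q ^+ t + q ^+ T = 1.
  elim: T => [|T IH]; first by rewrite big_ord0 mulr0 add0r expr0.
  rewrite big_ord_recr /= exprS -[RHS]IH; ring.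
rewrite -(ler_pM2l q1') mulfV ?gt_eqF //.
have := exprn_ge0 T q0; lra.
Qed.

Lemma pw_bound (e A c q : R) (t : nat) (m Q : nat -> R) :
  0 <= e -> 0 <= A -> 0 <= c -> 0 <= q < 1 ->
  (forall s, 0 <= m s) -> (forall s, 0 <= Q s) -> (forall s, m s <= Num.sqrt (Q s)) ->
  e <= A + c * \sum_(s < t.+1) q ^+ (t - s) * m s ->
  e ^+ 2 <= 3 * A ^+ 2 + 3 / 2 * c ^+ 2 * (1 - q)^-1 * Rq q Q t.
Proof.
move=> e0 A0 c0 /andP[q0 q1] m0 Q0 mQ he.
have q1' : 0 < 1 - q by rewrite subr_gt0.
set B := \sum_(s < t.+1) q ^+ (t - s) * m s in he.
set B' := \sum_(s < t.+1) q ^+ (t - s) * Num.sqrt (Q s).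
have B0 : 0 <= B by apply: sumr_ge0 => s _; rewrite mulr_ge0 ?exprn_ge0.
have BB : B <= B' by apply: ler_sum => s _; rewrite ler_wpM2l ?exprn_ge0.
have B'2 : B' ^+ 2 <= (1 - q)^-1 * Rq q Q t.
  have hw := @wCS R 'I_t.+1 (index_enum 'I_t.+1) (fun s : 'I_t.+1 => q ^+ (t - s)) (fun s : 'I_t.+1 => Num.sqrt (Q s)) (fun s => exprn_ge0 _ q0).
  apply: le_trans hw _.
  have -> : \sum_(s < t.+1) q ^+ (t - s) * Num.sqrt (Q s) ^+ 2 = Rq q Q t.
    by rewrite /Rq; apply: eq_bigr => s _; rewrite sqr_sqrtr.
  apply: ler_wpM2r; first exact: Rq_ge0.
  have hg := @Rq_geo q t; rewrite /Rq in hg.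
  have -> : \sum_(s < t.+1) q ^+ (t - s) = \sum_(s < t.+1) q ^+ (t - s) * 1.
    by apply: eq_bigr => s _; rewrite mulr1.
  by apply: hg; rewrite q0.
have h1 : e ^+ 2 <= (A + c * B) ^+ 2 by have := mulr_ge0 c0 B0; nra.
have h2 : (c * B) ^+ 2 <= c ^+ 2 * ((1 - q)^-1 * Rq q Q t).
  rewrite exprMn ler_wpM2l ?exprn_ge0 //; apply: le_trans B'2.
  by have := sqrtr_ge0 (Q 0); nra.
have h3 : (A + c * B) ^+ 2 <= 3 * A ^+ 2 + 3 / 2 * (c * B) ^+ 2.
  have := sqr_ge0 (2 * A - c * B); lra.
lra.
Qed.
End Geo.
Lemma meas_const (R : realType) (d0 : measure_display) (T : measurableType d0) (f : T -> R) :
  (forall x y, f x = f y) -> measurable_fun setT f.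
Proof.
move=> hf.
have [[x0 _]|] := pselect (exists x : T, True).
  have -> : f = cst (f x0) by apply/funext => x; exact: hf.
  exact: measurable_cst.
move=> hne _ Y mY.
have -> : [set: T] `&` f @^-1` Y = set0.
  apply/seteqP; split => x //= _; apply: hne; by exists x.
exact: measurable0.
Qed.

Section Traj.
Variables (R : realType) (n d : nat) (Xi : Type) (dO : measure_display) (Omega : measurableType dO).
Variables (W : nat -> 'M[R]_n) (g : 'I_n -> 'rV[R]_d -> Xi -> 'rV[R]_d)
  (eta : R) (x0 : 'I_n -> 'rV[R]_d) (xi : nat -> 'I_n -> Omega -> Xi).

Local Notation x := (sgp_x W g eta x0 xi).
Local Notation w := (sgp_w W g eta x0 xi).
Local Notation z := (sgp_z W g eta x0 xi).
Local Notation gr := (sgp_grad W g eta x0 xi).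
Local Notation xbar := (sgp_xbar W g eta x0 xi).

Lemma x_succ t i om : x t.+1 i om = \sum_(j < n) W t i j *: (x t j om - eta *: gr t j om).
Proof. by []. Qed.

Lemma w_succ t i om : w t.+1 i om = \sum_(j < n) W t i j * w t j om.
Proof. by []. Qed.

Lemma w_const t i om om' : w t i om = w t i om'.
Proof.
elim: t i => [|t IH] i //.
by rewrite !w_succ; apply: eq_bigr => j _; rewrite (IH j).
Qed.

Hypothesis mgr : forall t i k, measurable_fun setT (fun om => gr t i om ord0 k).

Lemma meas_x t i k : measurable_fun setT (fun om => x t i om ord0 k).
Proof.
elim: t i k => [|t IH] i k; first exact: measurable_cst.
have -> : (fun om => x t.+1 i om ord0 k) =
   (fun om => \sum_(j < n) W t i j * (x t j om ord0 k - eta * gr t j om ord0 k)).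
  apply/funext => om; rewrite x_succ summxE; apply: eq_bigr => j _; by rewrite !mxE.
apply: measurable_sum => j; apply: measurable_funM; first exact: measurable_cst.
apply: measurable_funB; first exact: IH.
apply: measurable_funM; first exact: measurable_cst.
exact: mgr.
Qed.

Lemma meas_z t i k : measurable_fun setT (fun om => z t i om ord0 k).
Proof.
have -> : (fun om => z t i om ord0 k) = (fun om => (w t i om)^-1 * x t i om ord0 k).
  by apply/funext => om; rewrite /sgp_z mxE.
apply: measurable_funM; last exact: meas_x.
by apply: meas_const => a b; rewrite (w_const t i a b).
Qed.

Lemma meas_xbar t k : measurable_fun setT (fun om => xbar t om ord0 k).
Proof.
have -> : (fun om => xbar t om ord0 k) = (fun om => n%:R^-1 * \sum_(i < n) x t i om ord0 k).
  by apply/funext => om; rewrite /sgp_xbar mxE summxE.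
apply: measurable_funM; first exact: measurable_cst.
by apply: measurable_sum => i; exact: meas_x.
Qed.
End Traj.
Section Integ.
Variables (R : realType) (dO : measure_display) (Omega : measurableType dO) (Pr : probability Omega R).
Local Notation Int f := (Pr.-integrable setT (EFin \o f)).
Local Notation Ex f := (\int[Pr]_om (f om)%:E)%E.
Local Notation RE f := (\int[Pr]_om f om).

Lemma Int_cst (c : R) : Int (fun _ => c).
Proof. exact: finite_measure_integrable_cst. Qed.

Lemma Int_D (f g : Omega -> R) : Int f -> Int g -> Int (fun om => f om + g om).
Proof.
move=> hf hg; have := integrableD measurableT hf hg.
by apply: eq_integrable => // om _ /=; rewrite EFinD.
Qed.

Lemma Int_Z (c : R) (f : Omega -> R) : Int f -> Int (fun om => c * f om).
Proof.
move=> hf; have := integrableZl measurableT c hf.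
by apply: eq_integrable => // om _ /=; rewrite EFinM.
Qed.

Lemma Int_sum (I : Type) (s : seq I) (f : I -> Omega -> R) :
  (forall i, Int (f i)) -> Int (fun om => \sum_(i <- s) f i om).
Proof.
move=> hf; elim: s => [|a s IH].
  by under eq_fun do rewrite big_nil; exact: Int_cst.
under eq_fun do rewrite big_cons; exact: Int_D.
Qed.

Lemma Int_le (f g : Omega -> R) : measurable_fun setT f ->
  (forall om, 0 <= f om <= g om) -> Int g -> Int f.
Proof.
move=> mf hfg hg; apply: le_integrable hg => //.
  exact/measurable_EFinP.
move=> om _ /=; have /andP[h1 h2] := hfg om.
by rewrite lee_fin !ger0_norm //; apply: le_trans h2.
Qed.

Lemma Int_fin (f : Omega -> R) : measurable_fun setT f -> (forall om, 0 <= f om) ->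
  (Ex f < +oo)%E -> Int f.
Proof.
move=> mf f0 hf; apply/integrableP; split; first exact/measurable_EFinP.
under eq_integral do rewrite /= ger0_norm //.
exact: hf.
Qed.

Lemma Ex_RE (f : Omega -> R) : Int f -> Ex f = (RE f)%:E.
Proof. by move=> hf; rewrite /Rintegral fineK //; exact: integrable_fin_num. Qed.

Lemma RE_D (f g : Omega -> R) : Int f -> Int g -> RE (fun om => f om + g om) = RE f + RE g.
Proof. by move=> hf hg; rewrite RintegralD. Qed.

Lemma RE_Z (c : R) (f : Omega -> R) : Int f -> RE (fun om => c * f om) = c * RE f.
Proof. by move=> hf; rewrite RintegralZl. Qed.

Lemma RE_cst (c : R) : RE (fun _ => c) = c.
Proof.
rewrite Rintegral_cst //; transitivity (c * fine (1%E : \bar R)); last by rewrite mulr1.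
by congr (_ * fine _); exact: probability_setT.
Qed.

Lemma RE_sum (I : Type) (s : seq I) (f : I -> Omega -> R) :
  (forall i, Int (f i)) -> RE (fun om => \sum_(i <- s) f i om) = \sum_(i <- s) RE (f i).
Proof.
move=> hf; elim: s => [|a s IH].
  by under eq_Rintegral do rewrite big_nil; rewrite big_nil RE_cst.
under eq_Rintegral do rewrite big_cons; rewrite big_cons RE_D ?IH //.
exact: Int_sum.
Qed.

Lemma RE_le (f g : Omega -> R) : Int f -> Int g -> (forall om, f om <= g om) -> RE f <= RE g.
Proof. by move=> hf hg h; apply: le_Rintegral. Qed.

Lemma RE_le_ae (f g : Omega -> R) : Int f -> Int g -> (forall om, 0 <= f om) -> (forall om, 0 <= g om) ->
  (\forall om \ae Pr, f om <= g om) -> RE f <= RE g.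
Proof.
move=> hf hg f0 g0 hae.
rewrite -lee_fin -!Ex_RE //.
apply: ae_ge0_le_integral => //.
- by move=> om _; rewrite lee_fin.
- by apply/measurable_EFinP; case/integrableP: hf => /measurable_EFinP.
- by move=> om _; rewrite lee_fin.
- by apply/measurable_EFinP; case/integrableP: hg => /measurable_EFinP.
- by apply: filterS hae => om h _; rewrite lee_fin.
Qed.
End Integ.
Section Misc.
Variable R : realType.
Lemma bigmax_ge0 m (F : 'I_m -> R) : (forall i, 0 <= F i) -> 0 <= \big[Num.max/0]_(i < m) F i.
Proof. move=> F0; apply: (big_ind (fun x => 0 <= x)) => // x y hx hy; by rewrite le_max hx. Qed.
Lemma bigmax_leQ m (F : 'I_m -> R) c : 0 <= c -> (forall i, F i <= c) -> \big[Num.max/0]_(i < m) F i <= c.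
Proof. move=> c0 Fc; apply: (big_ind (fun x => x <= c)) => // x y hx hy; by rewrite ge_max hx. Qed.
Lemma le_sum1 m (F : 'I_m -> R) j : (forall i, 0 <= F i) -> F j <= \sum_(i < m) F i.
Proof. by move=> F0; rewrite (bigD1 j) //= lerDl sumr_ge0. Qed.
End Misc.
Lemma mdot (R : realType) (dd : nat) (d0 : measure_display) (T : measurableType d0) (V : T -> 'rV[R]_dd) :
  (forall k, measurable_fun setT (fun om => V om ord0 k)) ->
  measurable_fun setT (fun om => dotv (V om) (V om)).
Proof.
move=> mV; rewrite /dotv; apply: measurable_sum => k; exact: measurable_funM.
Qed.
Lemma mcompB (R : realType) (dd : nat) (d0 : measure_display) (T : measurableType d0) (A B : T -> 'rV[R]_dd) :
  (forall k, measurable_fun setT (fun om => A om ord0 k)) ->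
  (forall k, measurable_fun setT (fun om => B om ord0 k)) ->
  forall k, measurable_fun setT (fun om => (A om - B om) ord0 k).
Proof.
move=> mA mB k.
have -> : (fun om => (A om - B om) ord0 k) = (fun om => A om ord0 k - B om ord0 k).
  by apply/funext => om; rewrite !mxE.
exact: measurable_funB.
Qed.
Local Close Scope classical_set_scope.
Unset Implicit Arguments.
Theorem lemmaA7 (R : realType) (n d : nat) (Xi : Type)
  (dO : measure_display) (Omega : measurableType dO)
  (Pr : probability Omega R)
  (E : rel 'I_n) (W : nat -> 'M[R]_n)
  (f : 'I_n -> 'rV[R]_d -> R) (gradf : 'I_n -> 'rV[R]_d -> 'rV[R]_d)
  (fstar : R)
  (g : 'I_n -> 'rV[R]_d -> Xi -> 'rV[R]_d)
  (xi : nat -> 'I_n -> Omega -> Xi)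
  (eta L sigma zeta delta : R) (B Delta T : nat)
  (x0 : 'I_n -> 'rV[R]_d) :
  (1 < n)%N ->
  (* base topology: bidirected with self-loops *)
  (forall i j, E i j = E j i) -> (forall i, E i i) ->
  (* nonnegative column-stochastic mixing matrices supported on E *)
  (forall t i j, 0 <= W t i j) ->
  (forall t j, \sum_(i < n) W t i j = 1) ->
  (forall t i j, W t i j != 0 -> E j i) ->
  (* f = (1/n) sum_i f_i, f^* its finite optimal value *)
  let fav := fun x => n%:R^-1 * \sum_(i < n) f i x in
  let gradfav := fun x => n%:R^-1 *: \sum_(i < n) gradf i x in
  (forall x, fstar <= fav x) ->
  (forall e, 0 < e -> exists x, fav x < fstar + e) ->
  (* Assumption (1): L-smoothness *)
  (forall i, L_smooth L (f i) (gradf i)) ->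
  (* Assumption (2) (the minibatch used at step t by node i) *)
  (forall t i x,
     (\int[Pr]_om (enorm (g i x (xi t i om) - gradf i x) ^+ 2)%:E
       <= (sigma ^+ 2)%:E)%E) ->
  (* Assumption (2) with fresh minibatches, along the SGP trajectory *)
  (forall t i,
     (\int[Pr]_om (enorm (sgp_grad W g eta x0 xi t i om
                          - gradf i (sgp_z W g eta x0 xi t i om)) ^+ 2)%:E
       <= (sigma ^+ 2)%:E)%E) ->
  (* the stochastic gradients are random variables *)
  (forall t i k, measurable_fun setT
       (fun om => sgp_grad W g eta x0 xi t i om ord0 k)) ->
  (* Assumption (3) *)
  (forall x, n%:R^-1 * \sum_(i < n) enorm (gradf i x - gradfav x) ^+ 2
             <= zeta ^+ 2) ->
  (* Assumption (4) *)
  (0 < B)%N -> (0 < Delta)%N ->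
  (forall l, diam_le (window_rel W B l) Delta) ->
  (* delta = min over t of the positive entries of W^(t) *)
  0 < delta ->
  (forall t i j, 0 < W t i j -> delta <= W t i j) ->
  (forall e, 0 < e -> exists t i j, 0 < W t i j /\ W t i j < delta + e) ->
  let C := 4 / delta ^+ (Delta * B) in
  let q := powR (1 - delta ^+ (Delta * B)) ((Delta * B)%:R^-1) in
  let X0 := \big[Num.max/0]_(m < n) enorm (x0 m) in
  let xbar := sgp_xbar W g eta x0 xi in
  let z := sgp_z W g eta x0 xi in
  (* almost-sure consensus bound *)
  (forall t i, {ae Pr, forall om,
     enorm (xbar t om - z t i om)
       <= C * q ^+ t * X0
          + eta * C * \sum_(s < t.+1) q ^+ (t - s) *
              \big[Num.max/0]_(j < n) enorm (sgp_grad W g eta x0 xi s j om)}) ->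
  let Pc := 1 - 9 * eta ^+ 2 * C ^+ 2 * L ^+ 2 * n%:R / (1 - q) ^+ 2 in
  0 < Pc ->
  0 < eta -> eta <= L^-1 ->
  (0 < T)%N ->
  let Ex := fun F : Omega -> R => (\int[Pr]_om (F om)%:E)%E in
  let M := fun t => ((n%:R^-1)%:E *
       \sum_(i < n) Ex (fun om => (enorm (xbar t om - z t i om) ^+ 2)%R))%E in
  let xbar0 := n%:R^-1 *: \sum_(i < n) x0 i in
  ((eta / 2)%:E * (\sum_(t < T) Ex (fun om => (enorm (gradfav (xbar t om)) ^+ 2)%R))
   + ((eta - L * eta ^+ 2) / 2)%:E *
       (\sum_(t < T) Ex (fun om =>
           (enorm (n%:R^-1 *: \sum_(i < n) gradf i (z t i om)) ^+ 2)%R))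
   <= (fav xbar0 - fstar + L * eta ^+ 2 * sigma ^+ 2 / (2 * n%:R) * T%:R)%:E
      + (eta * L ^+ 2 / 2)%:E * (\sum_(t < T) M t))%E ->
  ((1 - 9 * eta ^+ 2 * L ^+ 2 * C ^+ 2 / (Pc * (1 - q) ^+ 2))%:E
     * (\sum_(t < T) Ex (fun om => (enorm (gradfav (xbar t om)) ^+ 2)%R))
   <= (2 * (fav xbar0 - fstar) / eta + L * eta * sigma ^+ 2 * T%:R / n%:R
       + 3 * L ^+ 2 * C ^+ 2 * X0 ^+ 2 / (Pc * (1 - q) ^+ 2)
       + 3 * eta ^+ 2 * L ^+ 2 * C ^+ 2 * n%:R * sigma ^+ 2 * T%:R
           / (Pc * (1 - q) ^+ 2)
       + 9 * eta ^+ 2 * L ^+ 2 * C ^+ 2 * n%:R * zeta ^+ 2 * T%:R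
           / (Pc * (1 - q) ^+ 2))%:E)%E.


Proof.
move=> n1 Esym Erefl Wge0 Wcol WE fav gradfav fst_le fst_inf Lsm Hsig Hsigt Hmg Hzeta
  B0 Dl0 Hdiam dl0 Hdl Hdlinf C q X0 xbar z Hcons Pc Pc0 eta0 etaL T0 Ex M xbar0 Hcum.
have L0 : 0 < L.
  by rewrite -invr_gt0; apply: lt_le_trans etaL.
have n0 : 0 < n%:R :> R by rewrite ltr0n; apply: ltn_trans n1.
have [om0 _] : exists om : Omega, True.
  apply: contrapT => hne.
  have : Pr setT = Pr set0 by congr (Pr _); apply/seteqP; split => // om _; apply: hne; by exists om.
  move=> h; have h1 := probability_setT Pr; rewrite h in h1.
  have : (0 : \bar R) = 1%E by rewrite -h1; symmetry; exact: measure0.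
  by move/(congr1 fine) => /= /eqP; rewrite eq_sym oner_eq0.
have n0' : (0 < n)%N by apply: ltn_trans n1.
pose j0 : 'I_n := Ordinal n0'.
have dl1 : delta <= 1.
  have [i0 hi0] : exists i, 0 < W 0%N i j0.
    apply: contrapT => hne.
    have : \sum_(i < n) W 0%N i j0 = 0.
      apply: big1 => i _; apply/eqP; rewrite eq_le Wge0 andbT leNgt; apply/negP => h.
      by apply: hne; exists i.
    by rewrite Wcol => /eqP; rewrite oner_eq0.
  apply: le_trans (Hdl _ _ _ hi0) _.
  rewrite -(Wcol 0%N j0); exact: (@le_sum1 R n (fun i => W 0%N i j0) i0 (fun i => Wge0 _ _ _)).
have qq : 0 <= q < 1.
  have k0 : (0 < Delta * B)%N by rewrite muln_gt0 Dl0 B0.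
  have dk0 : 0 < delta ^+ (Delta * B) by rewrite exprn_gt0.
  have dk1 : delta ^+ (Delta * B) <= 1 by rewrite exprn_ile1 // ltW.
  have r0 : 0 < (Delta * B)%:R^-1 :> R by rewrite invr_gt0 ltr0n.
  apply/andP; split; first exact: powR_ge0.
  rewrite /q; set b := 1 - _.
  have b0 : 0 <= b by rewrite /b subr_ge0.
  have b1 : b < 1 by rewrite /b ltrBlDr ltrDl.
  have [->|bn0] := eqVneq b 0; first by rewrite powR0 ?gt_eqF.
  have := @gt0_ltr_powR R _ r0 b 1; rewrite powR1; apply; by rewrite ?nnegrE.
have q1 : 0 < 1 - q by case/andP: qq => _ h; rewrite subr_gt0.
have C0 : 0 <= C by rewrite /C divr_ge0 // exprn_ge0 // ltW.
have X00 : 0 <= X0 by apply: bigmax_ge0 => m; exact: enorm_ge0.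
pose gr := sgp_grad W g eta x0 xi.
pose hh t i om := dotv (xbar t om - z t i om) (xbar t om - z t i om).
pose aa t j om := dotv (gr t j om - gradf j (z t j om)) (gr t j om - gradf j (z t j om)).
pose DD t om := dotv (gradfav (xbar t om)) (gradfav (xbar t om)).
pose cc t j om := dotv (gradf j (xbar t om) - gradfav (xbar t om)) (gradf j (xbar t om) - gradfav (xbar t om)).
pose Qf s om := \sum_(j < n) (2 * aa s j om + 6 * L ^+ 2 * hh s j om) + 6 * (n%:R * zeta ^+ 2) + 6 * DD s om.
pose Phi t om := 3 * (C * q ^+ t * X0) ^+ 2 + 3 / 2 * (eta * C) ^+ 2 * (1 - q)^-1 * Rq q (fun s => Qf s om) t.
have mx := meas_x Hmg.
have mz := meas_z Hmg.
have mxb := meas_xbar Hmg.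
have mgf : forall j (V : Omega -> 'rV[R]_d), (forall k, measurable_fun setT (fun om => V om ord0 k)) ->
    forall k, measurable_fun setT (fun om => gradf j (V om) ord0 k).
  move=> j V mV k; apply: (@meas_lip R d dO Omega V (fun v => gradf j v ord0 k) L) => // u v.
  have [_ hL] := Lsm j.
  have -> : gradf j u ord0 k - gradf j v ord0 k = (gradf j u - gradf j v) ord0 k by rewrite !mxE.
  apply: le_trans (comp_le_enorm _ _) _; apply: le_trans (hL u v) _.
  apply: ler_wpM2l; first exact: ltW.
  apply: le_trans (@enorm_le_l1 R d (u - v)) _.
  by apply: ler_sum => i _; rewrite !mxE.
have mgfav : forall (V : Omega -> 'rV[R]_d), (forall k, measurable_fun setT (fun om => V om ord0 k)) ->
    forall k, measurable_fun setT (fun om => gradfav (V om) ord0 k).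
  move=> V mV k.
  have -> : (fun om => gradfav (V om) ord0 k) = (fun om => n%:R^-1 * \sum_(i < n) gradf i (V om) ord0 k).
    by apply/funext => om; rewrite /gradfav mxE summxE.
  apply: measurable_funM; first exact: measurable_cst.
  by apply: measurable_sum => i; exact: mgf.
have mhh : forall t i, measurable_fun setT (hh t i).
  move=> t i; apply: mdot; apply: mcompB; [exact: mxb | exact: mz].
have maa : forall t j, measurable_fun setT (aa t j).
  move=> t j; apply: mdot; apply: mcompB; first exact: Hmg.
  by apply: mgf => k'; exact: mz.
have mDD : forall t, measurable_fun setT (DD t).
  by move=> t; apply: mdot => k; apply: mgfav => k'; exact: mxb.
have mQf : forall s, measurable_fun setT (Qf s).
  move=> s; apply: measurable_funD; last by apply: measurable_funM => //; exact: measurable_cst.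
  apply: measurable_funD; last exact: measurable_cst.
  apply: measurable_sum => j; apply: measurable_funD; apply: measurable_funM => //; exact: measurable_cst.
have mPhi : forall t, measurable_fun setT (Phi t).
  move=> t; apply: measurable_funD; first exact: measurable_cst.
  apply: measurable_funM; first exact: measurable_cst.
  apply: measurable_sum => s; apply: measurable_funM => //; exact: measurable_cst.
have hh0 : forall t i om, 0 <= hh t i om by move=> *; exact: dotv_ge0.
have aa0 : forall t i om, 0 <= aa t i om by move=> *; exact: dotv_ge0.
have DD0 : forall t om, 0 <= DD t om by move=> *; exact: dotv_ge0.
have cc0 : forall t i om, 0 <= cc t i om by move=> *; exact: dotv_ge0.
have zeta0 : 0 <= n%:R * zeta ^+ 2 by rewrite mulr_ge0 ?ler0n ?sqr_ge0.
have Qf0 : forall s om, 0 <= Qf s om.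
  move=> s om; rewrite /Qf; apply: addr_ge0; last by rewrite mulr_ge0 ?DD0.
  apply: addr_ge0; last by rewrite mulr_ge0.
  by apply: sumr_ge0 => j _; apply: addr_ge0; apply: mulr_ge0 => //; have := sqr_ge0 L; lra.
have Phi0 : forall t om, 0 <= Phi t om.
  move=> t om; rewrite /Phi; apply: addr_ge0; first by rewrite mulr_ge0 ?sqr_ge0.
  apply: mulr_ge0; last by apply: Rq_ge0 => //; case/andP: qq.
  apply: mulr_ge0; last by rewrite invr_ge0 ltW.
  apply: mulr_ge0; last exact: sqr_ge0.
  by rewrite divr_ge0.
have hgr : forall s j om, dotv (gr s j om) (gr s j om) <= Qf s om.
  move=> s j om.
  have h1 := dot2 (gr s j om - gradf j (z s j om)) (gradf j (z s j om)).
  rewrite subrK in h1.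
  have h2 := dot3 (gradf j (z s j om) - gradf j (xbar s om)) (gradf j (xbar s om) - gradfav (xbar s om)) (gradfav (xbar s om)).
  rewrite addrA !subrK in h2.
  have h3 : dotv (gradf j (z s j om) - gradf j (xbar s om)) (gradf j (z s j om) - gradf j (xbar s om)) <= L ^+ 2 * hh s j om.
    rewrite /hh -[xbar s om - z s j om]opprB dotN.
    by apply: lip_sq; have [_ ->] := Lsm j.
  have h4 : \sum_(i < n) cc s i om <= n%:R * zeta ^+ 2.
    have := Hzeta (xbar s om); under eq_bigr do rewrite enorm_sq.
    by rewrite ler_pdivrMl // mulrC.
  have h5 : cc s j om <= \sum_(i < n) cc s i om by apply: (@le_sum1 R n (fun i => cc s i om)) => i; exact: cc0.
  have h6 : 2 * aa s j om + 6 * L ^+ 2 * hh s j om <= \sum_(i < n) (2 * aa s i om + 6 * L ^+ 2 * hh s i om).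
    apply: (@le_sum1 R n (fun i => 2 * aa s i om + 6 * L ^+ 2 * hh s i om)) => i.
    by apply: addr_ge0; apply: mulr_ge0 => //; have := sqr_ge0 L; lra.
  rewrite /Qf; rewrite -/(aa s j om) -/(cc s j om) -/(DD s om) in h1 h2.
  lra.
have hm : forall s om, \big[Num.max/0]_(j < n) enorm (gr s j om) <= Num.sqrt (Qf s om).
  move=> s om; apply: bigmax_leQ; first exact: sqrtr_ge0.
  by move=> j; rewrite /enorm ler_sqrt.
have hae : forall t i, \forall om \ae Pr, hh t i om <= Phi t om.
  move=> t i; apply: filterS (Hcons t i) => om h.
  rewrite /hh -enorm_sq /Phi.
  have Ce : 0 <= C * q ^+ t * X0.
    by apply: mulr_ge0 => //; apply: mulr_ge0 => //; apply: exprn_ge0; case/andP: qq.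
  have ec : 0 <= eta * C by rewrite mulr_ge0 // ltW.
  apply: (@pw_bound R (enorm (xbar t om - z t i om)) (C * q ^+ t * X0) (eta * C) q t
    (fun s => \big[Num.max/0]_(j < n) enorm (gr s j om)) (fun s => Qf s om)
    (enorm_ge0 _) Ce ec qq _ (fun s => Qf0 s om) (fun s => hm s om)).
  - by move=> s; apply: bigmax_ge0 => j; exact: enorm_ge0.
  - exact: h.
have Iaa : forall t j, Pr.-integrable setT (EFin \o aa t j).
  move=> t j; apply: (Int_fin (maa t j) (aa0 t j)).
  have := Hsigt t j.
  have -> : (fun om => (enorm (sgp_grad W g eta x0 xi t j om - gradf j (sgp_z W g eta x0 xi t j om)) ^+ 2)%:E)
    = (fun om => (aa t j om)%:E) by apply/funext => om; rewrite enorm_sq.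
  by move/le_lt_trans; apply; exact: ltry.
have Ix : forall t j, Pr.-integrable setT (EFin \o (fun om => dotv (sgp_x W g eta x0 xi t j om) (sgp_x W g eta x0 xi t j om))).
  elim => [|t IH] i.
    exact: (Int_cst Pr (dotv (x0 i) (x0 i))).
  pose wj j := sgp_w W g eta x0 xi t j om0.
  pose g0 j := dotv (gradf j 0) (gradf j 0).
  pose dx j om := dotv (sgp_x W g eta x0 xi t j om) (sgp_x W g eta x0 xi t j om).
  pose RHS j om := 2 * dx j om + 2 * (eta ^+ 2 * (2 * aa t j om + 2 * (2 * (L ^+ 2 * ((wj j)^-1 ^+ 2 * dx j om)) + 2 * g0 j))).
  apply: (Int_le (g := fun om => (\sum_(j < n) W t i j ^+ 2) * \sum_(j < n) RHS j om)).
  - by apply: mdot => k; exact: mx.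
  - move=> om; apply/andP; split; first exact: dotv_ge0.
    rewrite x_succ; apply: le_trans (dot_sum _ _) _.
    apply: ler_wpM2l; first by apply: sumr_ge0 => j _; exact: sqr_ge0.
    apply: ler_sum => j _.
    set xv := sgp_x W g eta x0 xi t j om.
    set gv := sgp_grad W g eta x0 xi t j om.
    have f1 := dot2 xv (- (eta *: gv)); rewrite dotN dotZ in f1.
    have f2 := dot2 (gv - gradf j (z t j om)) (gradf j (z t j om)); rewrite subrK in f2.
    have f3 := dot2 (gradf j (z t j om) - gradf j 0) (gradf j 0); rewrite subrK in f3.
    have f4 : dotv (gradf j (z t j om) - gradf j 0) (gradf j (z t j om) - gradf j 0) <= L ^+ 2 * dotv (z t j om) (z t j om).
      rewrite -[in leRHS](subr0 (z t j om)); apply: lip_sq; by have [_ ->] := Lsm j.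
    have f5 : dotv (z t j om) (z t j om) = (wj j)^-1 ^+ 2 * dx j om.
      by rewrite /z /sgp_z dotZ /wj (w_const _ _ _ _ _ t j om om0).
    rewrite f5 in f4.
    have X : dotv gv gv <= 2 * aa t j om + 2 * (2 * (L ^+ 2 * ((wj j)^-1 ^+ 2 * dx j om)) + 2 * g0 j).
      rewrite /aa /g0; lra.
    have := ler_wpM2l (sqr_ge0 eta) X.
    rewrite /RHS /dx -/xv; lra.
  - apply: Int_Z; apply: Int_sum => j.
    rewrite /RHS; apply: Int_D; first by apply: Int_Z; exact: IH.
    apply: Int_Z; apply: Int_Z; apply: Int_D; first by apply: Int_Z; exact: Iaa.
    apply: Int_Z; apply: Int_D; last exact: Int_cst.
    by apply: Int_Z; apply: Int_Z; apply: Int_Z; exact: IH.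
have Ihh : forall t i, Pr.-integrable setT (EFin \o hh t i).
  move=> t i.
  pose dx j om := dotv (sgp_x W g eta x0 xi t j om) (sgp_x W g eta x0 xi t j om).
  pose wi := sgp_w W g eta x0 xi t i om0.
  apply: (Int_le (g := fun om => 2 * (n%:R^-1 * \sum_(j < n) dx j om) + 2 * (wi^-1 ^+ 2 * dx i om))).
  - exact: mhh.
  - move=> om; apply/andP; split; first exact: hh0.
    have f1 := dot2 (xbar t om) (- z t i om); rewrite dotN in f1.
    have f2 : dotv (xbar t om) (xbar t om) <= n%:R^-1 * \sum_(j < n) dx j om.
      rewrite /xbar /sgp_xbar scaler_sumr; apply: le_trans (dot_sum _ _) _.
      apply: ler_wpM2r; first by apply: sumr_ge0 => j _; exact: dotv_ge0.
      rewrite sumr_const card_ord.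
      have -> : n%:R^-1 ^+ 2 *+ n = n%:R^-1 :> R.
        by rewrite -(mulr_natr (n%:R^-1 ^+ 2)); field; rewrite gt_eqF.
      by [].
    have f3 : dotv (z t i om) (z t i om) = wi^-1 ^+ 2 * dx i om.
      by rewrite /z /sgp_z dotZ /wi (w_const _ _ _ _ _ t i om om0).
    rewrite /hh; lra.
  - apply: Int_D; apply: Int_Z; apply: Int_Z; last exact: Ix.
    apply: Int_sum => j; exact: Ix.
have hEh : forall t i, Ex (fun om => (enorm (xbar t om - z t i om) ^+ 2)%R) = (\int[Pr]_om hh t i om)%:E.
  move=> t i; rewrite /Ex -(Ex_RE (Ihh t i)); congr integral; apply/funext => om.
  by rewrite /hh enorm_sq.
set mr := \sum_(t < T) (n%:R^-1 * \sum_(i < n) \int[Pr]_om hh t i om).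
have hSM : \sum_(t < T) M t = mr%:E.
  rewrite /mr -sumEFin; apply: eq_bigr => t _; rewrite /M.
  under eq_bigr do rewrite hEh.
  by rewrite sumEFin EFinM.
have hED : forall t, Ex (fun om => (enorm (gradfav (xbar t om)) ^+ 2)%R) = (\int[Pr]_om (DD t om)%:E)%E.
  move=> t; rewrite /Ex; congr integral; apply/funext => om.
  by rewrite /DD enorm_sq.
set S := \sum_(t < T) Ex (fun om => (enorm (gradfav (xbar t om)) ^+ 2)%R).
set G := \sum_(t < T) Ex (fun om => (enorm (n%:R^-1 *: \sum_(i < n) gradf i (z t i om)) ^+ 2)%R).
have G0 : (0 <= G)%E.
  by apply: sume_ge0 => t _; apply: integral_ge0 => om _; rewrite lee_fin sqr_ge0.
have S0 : (0 <= S)%E.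
  by apply: sume_ge0 => t _; apply: integral_ge0 => om _; rewrite lee_fin sqr_ge0.
have Leta : L * eta <= 1.
  have Li : 0 < L^-1 by rewrite invr_gt0.
  by rewrite -(ler_pM2l Li) mulrA mulVf ?gt_eqF // mul1r mulr1.
have cG0 : 0 <= (eta - L * eta ^+ 2) / 2.
  apply: divr_ge0 => //; rewrite subr_ge0 expr2 mulrA.
  by rewrite -[leRHS]mul1r ler_wpM2r // ltW.
set K := fav xbar0 - fstar + L * eta ^+ 2 * sigma ^+ 2 / (2 * n%:R) * T%:R.
have Hcum' : ((eta / 2)%:E * S <= (K + eta * L ^+ 2 / 2 * mr)%:E)%E.
  rewrite hSM -EFinM EFinD in Hcum.
  apply: le_trans Hcum; rewrite -/S -/G.
  by apply: leeDl; rewrite mule_ge0 // lee_fin.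
have eta2 : 0 < eta / 2 by rewrite divr_gt0.
have Sfin : S \is a fin_num.
  rewrite ge0_fin_numE //.
  have : (S <= ((eta / 2)^-1)%:E * (K + eta * L ^+ 2 / 2 * mr)%:E)%E by rewrite lee_pdivlMl.
  by move/le_lt_trans; apply; rewrite -EFinM ltry.
have IDD : forall t : 'I_T, Pr.-integrable setT (EFin \o DD t).
  move=> t; apply: (Int_fin (mDD t) (DD0 t)).
  rewrite -hED; apply: (@le_lt_trans _ _ S); last by rewrite ltey_eq Sfin.
  rewrite /S (bigD1 t) //= hED; apply: leeDl.
  by apply: sume_ge0 => s _; apply: integral_ge0 => om _; rewrite lee_fin sqr_ge0.
set sr := \sum_(t < T) \int[Pr]_om DD t om.
have hS : S = sr%:E.
  rewrite /S /sr -sumEFin; apply: eq_bigr => t _.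
  by rewrite hED (Ex_RE (IDD t)).
have IDD' : forall s, (s < T)%N -> Pr.-integrable setT (EFin \o DD s).
  by move=> s hs; exact: (IDD (Ordinal hs)).
have IQf : forall s, (s < T)%N -> Pr.-integrable setT (EFin \o Qf s).
  move=> s hs; rewrite /Qf; apply: Int_D; last by apply: Int_Z; exact: IDD'.
  apply: Int_D; last exact: Int_cst.
  by apply: Int_sum => j; apply: Int_D; apply: Int_Z; [exact: Iaa | exact: Ihh].
have IPhi : forall t, (t < T)%N -> Pr.-integrable setT (EFin \o Phi t).
  move=> t ht; rewrite /Phi; apply: Int_D; first exact: Int_cst.
  apply: Int_Z; rewrite /Rq; apply: Int_sum => s; apply: Int_Z; apply: IQf.
  by apply: leq_ltn_trans ht; rewrite -ltnS.
have step1 : mr <= \sum_(t < T) \int[Pr]_om Phi t om.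
  rewrite /mr; apply: ler_sum => t _.
  have -> : \int[Pr]_om Phi t om = n%:R^-1 * \sum_(i < n) \int[Pr]_om Phi t om.
    by rewrite sumr_const card_ord -(mulr_natr (\int[Pr]_om Phi t om)) mulrCA mulVf ?gt_eqF // mulr1.
  apply: ler_wpM2l; first by rewrite invr_ge0 ltW.
  apply: ler_sum => i _.
  exact: (RE_le_ae (Ihh t i) (IPhi t (ltn_ord t)) (hh0 t i) (Phi0 t) (hae t i)).
pose k2 := (1 - q) ^+ 2.
have k20 : 0 < k2 by rewrite exprn_gt0.
have q0 : 0 <= q by case/andP: qq.
pose a := (eta * C) ^+ 2.
have a0 : 0 <= a by exact: sqr_ge0.
pose Psi om := 3 * (C ^+ 2 * X0 ^+ 2) / k2 + 3 / 2 * a / k2 * \sum_(s < T) Qf s om.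
have IPsi : Pr.-integrable setT (EFin \o Psi).
  rewrite /Psi; apply: Int_D; first exact: Int_cst.
  by apply: Int_Z; apply: Int_sum => s; exact: IQf.
have hk2 : k2^-1 = (1 - q)^-1 ^+ 2 by rewrite /k2 exprVn.
have pw2 : forall om, \sum_(t < T) Phi t om <= Psi om.
  move=> om; rewrite /Phi /Psi big_split /=; apply: lerD.
    have -> : \sum_(t < T) 3 * (C * q ^+ t * X0) ^+ 2 = 3 * (C ^+ 2 * X0 ^+ 2) * \sum_(t < T) (q ^+ 2) ^+ t.
      rewrite mulr_sumr; apply: eq_bigr => t _; rewrite -exprM mulnC exprM; ring.
    apply: ler_wpM2l; first by rewrite mulr_ge0 // mulr_ge0 // sqr_ge0.
    have q2 : 0 <= q ^+ 2 < 1.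
      by rewrite sqr_ge0 /= expr_lt1 //; case/andP: qq.
    apply: le_trans (sum_geo _ q2) _.
    rewrite lef_pV2 ?posrE ?subr_gt0 //; last by case/andP: q2.
    rewrite /k2; have : q <= 1 by case/andP: qq => _ /ltW.
    by move=> h; nra.
  rewrite -mulr_sumr.
  have := sumRq_le T qq (fun s => Qf0 s om).
  have c0 : 0 <= 3 / 2 * (eta * C) ^+ 2 * (1 - q)^-1.
    apply: mulr_ge0; last by rewrite invr_ge0 ltW.
    by apply: mulr_ge0; [rewrite divr_ge0 | exact: sqr_ge0].
  move=> h; apply: le_trans (ler_wpM2l c0 h) _.
  rewrite hk2 /a le_eqVlt; apply/orP; left; apply/eqP; ring.
have step2 : \sum_(t < T) \int[Pr]_om Phi t om <= \int[Pr]_om Psi om.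
  have hI : forall t : 'I_T, Pr.-integrable setT (EFin \o Phi t) by move=> t; exact: IPhi.
  rewrite -(RE_sum _ hI).
  apply: RE_le => //; first by apply: Int_sum => t; exact: IPhi.
have hIQ : forall s : 'I_T, Pr.-integrable setT (EFin \o Qf s) by move=> s; exact: IQf.
have step4 : \int[Pr]_om Psi om = 3 * (C ^+ 2 * X0 ^+ 2) / k2 + 3 / 2 * a / k2 * \sum_(s < T) \int[Pr]_om Qf s om.
  rewrite /Psi RE_D; first last.
  - by apply: Int_Z; apply: Int_sum => s; exact: IQf.
  - exact: Int_cst.
  rewrite RE_cst RE_Z; last by apply: Int_sum => s; exact: IQf.
  by rewrite (RE_sum _ hIQ).
have Raa : forall s j, \int[Pr]_om aa s j om <= sigma ^+ 2.
  move=> s j; rewrite -lee_fin -(Ex_RE (Iaa s j)).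
  have := Hsigt s j.
  have -> : (fun om => (enorm (sgp_grad W g eta x0 xi s j om - gradf j (sgp_z W g eta x0 xi s j om)) ^+ 2)%:E)
    = (fun om => (aa s j om)%:E) by apply/funext => om; rewrite enorm_sq.
  by [].
have step5 : forall s : 'I_T, \int[Pr]_om Qf s om <=
    2 * (n%:R * sigma ^+ 2) + 6 * L ^+ 2 * \sum_(j < n) \int[Pr]_om hh s j om + 6 * (n%:R * zeta ^+ 2) + 6 * \int[Pr]_om DD s om.
  move=> s.
  have I1 : forall j, Pr.-integrable setT (EFin \o (fun om => 2 * aa s j om + 6 * L ^+ 2 * hh s j om)).
    by move=> j; apply: Int_D; apply: Int_Z; [exact: Iaa | exact: Ihh].
  rewrite /Qf RE_D; first last.
  - by apply: Int_Z; exact: IDD'.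
  - by apply: Int_D; [exact: Int_sum | exact: Int_cst].
  rewrite RE_D; first last.
  - exact: Int_cst.
  - exact: Int_sum.
  rewrite RE_cst (RE_Z _ (IDD' s (ltn_ord s))) (RE_sum _ I1).
  have h1 : \sum_(j < n) \int[Pr]_om (2 * aa s j om + 6 * L ^+ 2 * hh s j om)
      <= 2 * (n%:R * sigma ^+ 2) + 6 * L ^+ 2 * \sum_(j < n) \int[Pr]_om hh s j om.
    have -> : n%:R * sigma ^+ 2 = \sum_(j < n) sigma ^+ 2 by rewrite sumr_const card_ord mulr_natl.
    rewrite !mulr_sumr -big_split /=; apply: ler_sum => j _.
    rewrite RE_D; first last.
    - by apply: Int_Z; exact: Ihh.
    - by apply: Int_Z; exact: Iaa.
    rewrite (RE_Z _ (Iaa s j)) (RE_Z _ (Ihh s j)).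
    by have := Raa s j; lra.
  lra.
have hnm : n%:R * mr = \sum_(s < T) \sum_(j < n) \int[Pr]_om hh s j om.
  rewrite /mr mulr_sumr; apply: eq_bigr => t _; by rewrite mulrA mulfV ?gt_eqF // mul1r.
have eqQ : \sum_(s < T) (2 * (n%:R * sigma ^+ 2) + 6 * L ^+ 2 * \sum_(j < n) \int[Pr]_om hh s j om + 6 * (n%:R * zeta ^+ 2) + 6 * \int[Pr]_om DD s om)
   = (2 * (n%:R * sigma ^+ 2)) *+ T + 6 * L ^+ 2 * (n%:R * mr) + (6 * (n%:R * zeta ^+ 2)) *+ T + 6 * sr.
  by rewrite !big_split /= !sumr_const card_ord -!mulr_sumr hnm.
have hsumQ : \sum_(s < T) \int[Pr]_om Qf s om <= (2 * (n%:R * sigma ^+ 2)) *+ T + 6 * L ^+ 2 * (n%:R * mr) + (6 * (n%:R * zeta ^+ 2)) *+ T + 6 * sr.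
  by rewrite -eqQ; apply: ler_sum => s _; exact: step5.
have e1 := mulr_natl (2 * (n%:R * sigma ^+ 2)) T.
have e2 := mulr_natl (6 * (n%:R * zeta ^+ 2)) T.
set X := \sum_(s < T) \int[Pr]_om Qf s om in step4 hsumQ.
set Y := \int[Pr]_om Psi om in step2 step4.
set Z := \sum_(t < T) \int[Pr]_om Phi t om in step1 step2.
have hA : mr <= 3 * (C ^+ 2 * X0 ^+ 2) / k2 + 3 / 2 * a / k2 * X by lra.
have ca : 0 <= 3 / 2 * a / k2.
  apply: mulr_ge0; last by rewrite invr_ge0 ltW.
  by apply: mulr_ge0 => //; exact: divr_ge0.
have hA' : mr <= 3 * (C ^+ 2 * X0 ^+ 2) / k2 + 3 / 2 * a / k2 * ((2 * (n%:R * sigma ^+ 2)) *+ T + 6 * L ^+ 2 * (n%:R * mr) + (6 * (n%:R * zeta ^+ 2)) *+ T + 6 * sr).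
  by apply: le_trans hA _; rewrite lerD2l; exact: ler_wpM2l.
rewrite -e1 -e2 in hA'.
have hA2 : k2 * mr <= 3 * (C ^+ 2 * X0 ^+ 2) + 3 * a * T%:R * (n%:R * sigma ^+ 2) + 9 * a * T%:R * (n%:R * zeta ^+ 2) + 9 * a * sr + 9 * a * L ^+ 2 * n%:R * mr.
  rewrite -(ler_pM2l k20) in hA'.
  apply: le_trans hA' _; rewrite le_eqVlt; apply/orP; left; apply/eqP.
  field; rewrite gt_eqF //.
have hB : sr <= 2 * K / eta + L ^+ 2 * mr.
  rewrite hS -EFinM lee_fin in Hcum'.
  rewrite -(ler_pM2l eta2); apply: le_trans Hcum' _; rewrite le_eqVlt; apply/orP; left; apply/eqP.
  field; rewrite gt_eqF //.
rewrite hS -EFinM lee_fin.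
have Dpk0 : 0 < Pc * k2 by rewrite mulr_gt0.
have q1n : 1 - q != 0 by rewrite gt_eqF.
have Pcn : Pc != 0 by rewrite gt_eqF.
have etan : eta != 0 by rewrite gt_eqF.
have nn : n%:R != 0 :> R by rewrite gt_eqF.
have hPk : Pc * k2 = k2 - 9 * a * L ^+ 2 * n%:R by rewrite /Pc /k2 /a; field.
rewrite -(ler_pM2l Dpk0).
have eL : Pc * k2 * ((1 - 9 * eta ^+ 2 * L ^+ 2 * C ^+ 2 / (Pc * (1 - q) ^+ 2)) * sr)
    = Pc * k2 * sr - 9 * a * L ^+ 2 * sr.
  by rewrite /k2 /a; field; rewrite ?q1n ?Pcn ?etan ?nn.
rewrite eL.
have eR : Pc * k2 * (2 * (fav xbar0 - fstar) / eta + L * eta * sigma ^+ 2 * T%:R / n%:R +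
     3 * L ^+ 2 * C ^+ 2 * X0 ^+ 2 / (Pc * (1 - q) ^+ 2) +
     3 * eta ^+ 2 * L ^+ 2 * C ^+ 2 * n%:R * sigma ^+ 2 * T%:R / (Pc * (1 - q) ^+ 2) +
     9 * eta ^+ 2 * L ^+ 2 * C ^+ 2 * n%:R * zeta ^+ 2 * T%:R / (Pc * (1 - q) ^+ 2))
   = Pc * k2 * (2 * K / eta) + L ^+ 2 * (3 * (C ^+ 2 * X0 ^+ 2) + 3 * a * T%:R * (n%:R * sigma ^+ 2) + 9 * a * T%:R * (n%:R * zeta ^+ 2)).
  by rewrite /K /k2 /a; field; rewrite ?q1n ?Pcn ?etan ?nn.
rewrite eR.
have i1 := ler_wpM2l (ltW Dpk0) hB.
have i2 := ler_wpM2l (sqr_ge0 L) hA2.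
have e3 : Pc * k2 * (2 * K / eta + L ^+ 2 * mr) = Pc * k2 * (2 * K / eta) + L ^+ 2 * (k2 * mr) - L ^+ 2 * (9 * a * L ^+ 2 * n%:R * mr).
  by rewrite hPk; ring.
rewrite e3 in i1.
have e4 : L ^+ 2 * (3 * (C ^+ 2 * X0 ^+ 2) + 3 * a * T%:R * (n%:R * sigma ^+ 2) + 9 * a * T%:R * (n%:R * zeta ^+ 2) + 9 * a * sr + 9 * a * L ^+ 2 * n%:R * mr)
   = L ^+ 2 * (3 * (C ^+ 2 * X0 ^+ 2) + 3 * a * T%:R * (n%:R * sigma ^+ 2) + 9 * a * T%:R * (n%:R * zeta ^+ 2)) + 9 * a * L ^+ 2 * sr + L ^+ 2 * (9 * a * L ^+ 2 * n%:R * mr).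
  by ring.
rewrite e4 in i2.
lra.
Qed.
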